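(* Let $\mathcal{P}\subset\mathbb{R}^d$ be a finite set of item vectors, $\bm{q}\in\mathbb{R}^d$, $k>1$ an integer, $\lambda\in[0,1]$, $\mu>0$, and assume $\langle\bm{x},\bm{y}\rangle\ge0$ for all $\bm{x},\bm{y}\in\mathcal{P}\cup\{\bm{q}\}$. Let $\mathcal{N}\subseteq\mathcal{P}$ be nonempty with center $\bm{c}=\frac{1}{|\mathcal{N}|}\sum_{\bm{p}\in\mathcal{N}}\bm{p}$, and for $\bm{p}\in\mathcal{N}$ let $r_{\bm{p}}=\|\bm{p}-\bm{c}\|$. Then for every $\bm{p}\in\mathcal{N}$, every $\mathcal{S}\subseteq\mathcal{P}$, and $\Delta_f$ equal to either $\Delta_{f_{avg}}$ or $\Delta_{f_{max}}$, $$\Delta_f(\bm{p},\mathcal{S})\le\tfrac{\lambda}{k}\big(\langle\bm{q},\bm{c}\rangle+r_{\bm{p}}\|\bm{q}\|\big).$$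
   Context: $\Delta_{f_{avg}}(\bm{p},\mathcal{S}) = \frac{\lambda}{k}\langle\bm{p},\bm{q}\rangle - \frac{2\mu(1-\lambda)}{k(k-1)}\sum_{\bm{p}'\in\mathcal{S}}\langle\bm{p},\bm{p}'\rangle$ and $\Delta_{f_{max}}(\bm{p},\mathcal{S}) = \frac{\lambda}{k}\langle\bm{p},\bm{q}\rangle - \mu(1-\lambda)\big(\max_{\bm{p}_x\ne\bm{p}_y\in\mathcal{S}\cup\{\bm{p}\}}\langle\bm{p}_x,\bm{p}_y\rangle - \max_{\bm{p}_x\ne\bm{p}_y\in\mathcal{S}}\langle\bm{p}_x,\bm{p}_y\rangle\big)$, where a maximum over an empty collection of pairs is taken to be $0$. The set $\mathcal{N}$ plays the role of a leaf node of a ball tree (BC-Tree) storing its centroid and, for each item, its distance to the centroid. *)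

(* Defs.v *)
From HB Require Import structures.
From mathcomp Require Import all_boot all_order all_algebra.
From mathcomp Require Import finmap.
Set Implicit Arguments. Unset Strict Implicit. Unset Printing Implicit Defensive.
Import Order.TTheory GRing.Theory Num.Theory.
Local Open Scope ring_scope.
Local Open Scope fset_scope.

Section Defs.
Variables (R : rcfType) (d : nat).

Definition dotp (u v : 'rV[R]_d) : R := \sum_(i < d) u 0 i * v 0 i.
Definition vnorm (u : 'rV[R]_d) : R := Num.sqrt (dotp u u).

Definition center (N : {fset 'rV[R]_d}) : 'rV[R]_d :=
  (#|` N|%:R)^-1 *: \sum_(p <- N) p.

(* maximum of <px,py> over pairs px <> py of S; 0 if there is no such pair *)
Definition pairvals (S : {fset 'rV[R]_d}) : seq R :=
  [seq dotp xy.1 xy.2 | xy <- [seq (x, y) | x <- S, y <- S] & xy.1 != xy.2].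
Definition maxpair (S : {fset 'rV[R]_d}) : R :=
  let vs := pairvals S in foldr Num.max (head 0 vs) vs.

Definition delta_avg (lam mu : R) (k : nat) (q p : 'rV[R]_d)
    (S : {fset 'rV[R]_d}) : R :=
  lam / k%:R * dotp p q
  - 2 * mu * (1 - lam) / (k%:R * (k%:R - 1)) * \sum_(p' <- S) dotp p p'.

Definition delta_max (lam mu : R) (k : nat) (q p : 'rV[R]_d)
    (S : {fset 'rV[R]_d}) : R :=
  lam / k%:R * dotp p q - mu * (1 - lam) * (maxpair (p |` S) - maxpair S).

End Defs.

(* Main.v *)
Require Import Defs.
From HB Require Import structures.
From mathcomp Require Import all_boot all_order all_algebra.
From mathcomp Require Import finmap ring lra.
Import Order.TTheory GRing.Theory Num.Theory.
Local Open Scope ring_scope.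
Local Open Scope fset_scope.

Section H.
Variables (R : rcfType) (d : nat).
Implicit Types u v : 'rV[R]_d.

Lemma dotpC u v : dotp u v = dotp v u.
Proof. by rewrite /dotp; apply: eq_bigr => i _; rewrite mulrC. Qed.

Lemma dotpBl u v w : dotp (u - v) w = dotp u w - dotp v w.
Proof. by rewrite /dotp -sumrB; apply: eq_bigr => i _; rewrite !mxE mulrBl. Qed.

Lemma dotp_ge0 u : 0 <= dotp u u.
Proof. by apply: sumr_ge0 => i _; rewrite -expr2 sqr_ge0. Qed.

Lemma lagrange u v :
  \sum_(i < d) \sum_(j < d) (u 0 i * v 0 j - u 0 j * v 0 i) ^+ 2
  = 2 * (dotp u u * dotp v v - dotp u v ^+ 2).
Proof.
have E : forall i j, (u 0 i * v 0 j - u 0 j * v 0 i) ^+ 2 =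
   (u 0 i * u 0 i) * (v 0 j * v 0 j) + (v 0 i * v 0 i) * (u 0 j * u 0 j)
   - 2 * ((u 0 i * v 0 i) * (u 0 j * v 0 j)).
  by move=> i j; ring.
have P2 : forall a b : 'I_d -> R,
    \sum_(i < d) \sum_(j < d) a i * b j = (\sum_i a i) * (\sum_j b j).
  by move=> a b; rewrite mulr_suml; apply: eq_bigr => i _; rewrite mulr_sumr.
under eq_bigr => i _ do under eq_bigr => j _ do rewrite E.
under eq_bigr => i _ do rewrite sumrB big_split /=.
rewrite sumrB big_split /= !P2.
under eq_bigr => i _ do rewrite -mulr_sumr.
rewrite -mulr_sumr P2 /dotp; ring.
Qed.

Lemma cauchy_schwarz u v : dotp u v <= vnorm u * vnorm v.
Proof.
have h : dotp u v ^+ 2 <= dotp u u * dotp v v.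
  rewrite -subr_ge0 -(@pmulr_rge0 _ 2) // -lagrange.
  by apply: sumr_ge0 => i _; apply: sumr_ge0 => j _; apply: sqr_ge0.
rewrite /vnorm -sqrtrM ?dotp_ge0 //.
apply: (le_trans (real_ler_norm (num_real _))).
by rewrite -sqrtr_sqr ler_sqrt // mulr_ge0 ?dotp_ge0.
Qed.


Lemma foldr_max_ge (a x : R) s : x \in s -> x <= foldr Num.max a s.
Proof.
elim: s => //= y s IH; rewrite inE => /orP [/eqP ->|/IH h]; rewrite le_max ?lexx //.
by rewrite h orbT.
Qed.

Lemma foldr_max_ge0 (a : R) s : a <= foldr Num.max a s.
Proof. by elim: s => //= y s IH; rewrite le_max IH orbT. Qed.

Lemma foldr_max_le (a M : R) s : a <= M -> (forall x, x \in s -> x <= M) ->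
  foldr Num.max a s <= M.
Proof.
move=> ha; elim: s => //= y s IH h; rewrite ge_max h ?inE ?eqxx //=.
by apply: IH => x hx; apply: h; rewrite inE hx orbT.
Qed.

Lemma pairvals_sub (S T : {fset 'rV[R]_d}) : S `<=` T ->
  {subset pairvals S <= pairvals T}.
Proof.
move=> /fsubsetP sub z /mapP [[x y]] /=; rewrite mem_filter /= => /andP [hne].
case/allpairsP => [[x' y']] /= [hx hy [e1 e2]] ->; subst x y.
apply/mapP; exists (x', y') => //; rewrite mem_filter /= hne /=.
by apply/allpairsP; exists (x', y') => /=; rewrite !sub.
Qed.

Lemma pairvals_ge0 (T : {fset 'rV[R]_d}) :
  (forall x y, x \in T -> y \in T -> 0 <= dotp x y) ->
  forall z, z \in pairvals T -> 0 <= z.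
Proof.
move=> h z /mapP [[x y]] /=; rewrite mem_filter /= => /andP [_].
by case/allpairsP => [[x' y']] /= [hx hy [-> ->]] ->; apply: h.
Qed.

Lemma maxpair_ge0 (T : {fset 'rV[R]_d}) :
  (forall x y, x \in T -> y \in T -> 0 <= dotp x y) -> 0 <= maxpair T.
Proof.
move=> h; rewrite /maxpair; apply: le_trans (foldr_max_ge0 _ _).
case E: (pairvals T) => [|z s] //=; apply: (@pairvals_ge0 T h).
by rewrite E inE eqxx.
Qed.

Lemma maxpair_mono (S T : {fset 'rV[R]_d}) : S `<=` T ->
  (forall x y, x \in T -> y \in T -> 0 <= dotp x y) -> maxpair S <= maxpair T.
Proof.
move=> sub h; rewrite {1}/maxpair.
case E: (pairvals S) => [|z s]; first exact: maxpair_ge0.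
have hin : forall x, x \in z :: s -> x <= maxpair T.
  by move=> x; rewrite -E => /(@pairvals_sub S T sub) hx; apply: foldr_max_ge.
exact: (foldr_max_le _ _ _ (hin z (mem_head z s)) hin).
Qed.

End H.

Theorem corollary1 (R : rcfType) (d : nat) (P : {fset 'rV[R]_d}) (q : 'rV[R]_d)
    (k : nat) (lam mu : R)
    (hk : (1 < k)%N) (hlam0 : 0 <= lam) (hlam1 : lam <= 1) (hmu : 0 < mu)
    (hpos : forall x y, x \in q |` P -> y \in q |` P -> 0 <= dotp x y)
    (N : {fset 'rV[R]_d}) (hNP : N `<=` P) (hN0 : N != fset0) :
  forall p, p \in N -> forall S : {fset 'rV[R]_d}, S `<=` P ->
    let c := center N in
    let bound := lam / k%:R * (dotp q c + vnorm (p - c) * vnorm q) in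
    delta_avg lam mu k q p S <= bound /\ delta_max lam mu k q p S <= bound.
Proof.
move=> p pN S SP c bound.
have hP : forall x y, x \in P -> y \in P -> 0 <= dotp x y.
  by move=> x y hx hy; apply: hpos; rewrite in_fset1U ?hx ?hy orbT.
have pP : p \in P by apply: (fsubsetP hNP).
have key : lam / k%:R * dotp p q <= bound.
  rewrite /bound; apply: ler_wpM2l; first by apply: divr_ge0 => //; apply: ler0n.
  have -> : dotp p q = (dotp c q + dotp (p - c) q)%R by rewrite dotpBl addrC subrK.
  by rewrite (@dotpC _ _ q c) lerD2l; apply: cauchy_schwarz.
have h1lam : 0 <= 1 - lam by rewrite subr_ge0.
split.
- rewrite /delta_avg; apply: le_trans key; rewrite lerBlDr lerDl.
  apply: mulr_ge0.
    apply: divr_ge0; first by apply: mulr_ge0 => //; apply: mulr_ge0 => //; apply: ltW.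
    apply: mulr_ge0; first exact: ler0n.
    by rewrite subr_ge0 ler1n ltnW.
  rewrite big_seq; apply: sumr_ge0 => p' hp'; apply: hP => //.
  exact: (fsubsetP SP).
- rewrite /delta_max; apply: le_trans key; rewrite lerBlDr lerDl.
  apply: mulr_ge0; first by apply: mulr_ge0 => //; apply: ltW.
  rewrite subr_ge0; apply: maxpair_mono; first exact: fsubsetU1.
  move=> x y; rewrite !in_fset1U => /orP [/eqP ->|hx] /orP [/eqP ->|hy];
    apply: hP => //; exact: (fsubsetP SP).
Qed.
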